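(* Let $G$ be a finite connected strongly regular graph that is not a complete graph $K_n$ ($n\ge2$) and that contains $C_3$ as a subgraph. Then $\mathrm{L}(G)$ is not strongly regular.
   Context: A finite simple graph on $v$ vertices is strongly regular with parameters $(v,k,\lambda,\mu)$, where $k,\lambda,\mu$ are nonnegative integers, if every vertex has degree $k$, every pair of adjacent vertices has exactly $\lambda$ common neighbours, and every pair of distinct non-adjacent vertices has exactly $\mu$ common neighbours. For a simple graph $G$, $\mathrm{L}(G)$ has vertex set $E(G)$, two vertices being adjacent iff the corresponding edges of $G$ share an endpoint. *)

(* Defs.v *)
From mathcomp Require Import all_boot all_order.
Set Implicit Arguments. Unset Strict Implicit. Unset Printing Implicit Defensive.

Section Graphs.
Variable T : finType.

Definition simple_graph (e : rel T) : Prop := symmetric e /\ irreflexive e.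

(* strongly regular with parameters (v,k,lambda,mu), v = #|T| *)
Definition srg_params (e : rel T) (k l m : nat) : Prop :=
  [/\ forall x, #|[set y | e x y]| = k,
      forall x y, e x y -> #|[set z | e x z && e y z]| = l &
      forall x y, x != y -> ~~ e x y -> #|[set z | e x z && e y z]| = m].

Definition strongly_regular (e : rel T) : Prop :=
  exists k l m, srg_params e k l m.

Definition connected (e : rel T) : Prop := forall x y, connect e x y.

Definition is_complete_n_ge2 (e : rel T) : Prop :=
  2 <= #|T| /\ forall x y, x != y -> e x y.

Definition has_triangle (e : rel T) : Prop :=
  exists x y z, [&& x != y, y != z, z != x, e x y, e y z & e z x].

Definition is_edge (e : rel T) (A : {set T}) : bool :=
  [exists x, exists y, e x y && (A == [set x; y])].

Definition edge_type (e : rel T) : finType := {A : {set T} | is_edge e A}.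

Definition line_rel (e : rel T) : rel (edge_type e) :=
  fun a b => (a != b) && (val a :&: val b != set0).
End Graphs.
Arguments line_rel {T} e _ _.
Arguments edge_type {T} e.

(* Main.v *)
Require Import Defs.
From mathcomp Require Import all_boot all_order.
Set Implicit Arguments. Unset Strict Implicit. Unset Printing Implicit Defensive.

Lemma path_lemma (T : finType) (e : rel T) (x : T) p : forall u, path e u p ->
  (u == x) || e x u -> ~~ ((last u p == x) || e x (last u p)) ->
  exists c z, [&& e x c, e c z, ~~ e x z & z != x].
Proof.
elim: p => [|w p IH] u /=; first by move=> _ ->.
move=> /andP[euw pw] hu hl.
case hw: ((w == x) || e x w); first exact: IH pw hw hl.
move: hw => /norP[wx exw].
case: (boolP (u == x)) hu => [/eqP ux _|ux /= exu].
  by rewrite -ux euw in exw.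
by exists u, w; rewrite exu euw exw wx.
Qed.

Lemma mk_edge (T : finType) (e : rel T) x y : e x y -> is_edge e [set x; y].
Proof. by move=> h; apply/existsP; exists x; apply/existsP; exists y; rewrite h eqxx. Qed.

Theorem mainTheorem7 (T : finType) (e : rel T) :
  simple_graph e ->
  connected e ->
  strongly_regular e ->
  ~ is_complete_n_ge2 e ->
  has_triangle e ->
  ~ strongly_regular (line_rel e).
Proof.
move=> [esym eirr] conn [k [l [m [_ hl _]]]] ncomp [x0 [y0 [z0 tri]]].
case/and5P: tri => x0y0 _ _ ex0y0 /andP[ey0z0 ez0x0].
have l1 : 0 < l.
  rewrite -(hl _ _ ex0y0); apply/card_gt0P; exists z0.
  by rewrite inE esym ez0x0 ey0z0.
have [x [y [xy nexy]]] : exists x y, x != y /\ ~~ e x y.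
  case: (boolP [exists x, exists y, (x != y) && ~~ e x y]).
    by move=> /existsP[x /existsP[y /andP[h1 h2]]]; exists x, y.
  move=> /existsPn H; exfalso; apply: ncomp; split.
    by apply/card_gt1P; exists x0, y0.
  move=> a b ab; move/existsPn: (H a) => /(_ b).
  by rewrite ab /= negbK.
have [c [z /and4P[exc ecz nexz zx]]] : exists c z, [&& e x c, e c z, ~~ e x z & z != x].
  move/connectP: (conn x y) => [p pp yl].
  apply: (path_lemma pp); first by rewrite eqxx.
  by rewrite -yl negb_or eq_sym xy.
have [d /andP[ecd exd]] : exists d, e c d && e x d.
  have ecx : e c x by rewrite esym.
  have : 0 < #|[set z | e c z && e x z]| by rewrite (hl _ _ ecx).
  by move=> /card_gt0P[d]; rewrite inE; exists d.
move=> [kL [lL [mL [_ hL _]]]].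
have cx : c != x by apply: contraTneq exc => ->; rewrite eirr.
have cd : c != d by apply: contraTneq ecd => ->; rewrite eirr.
have cz : c != z by apply: contraTneq ecz => ->; rewrite eirr.
have xd : x != d by apply: contraTneq exd => ->; rewrite eirr.
have ecx : e c x by rewrite esym.
pose A : edge_type e := exist (fun A => is_edge e A) _ (mk_edge ecx).
pose B : edge_type e := exist (fun A => is_edge e A) _ (mk_edge ecd).
pose B' : edge_type e := exist (fun A => is_edge e A) _ (mk_edge ecz).
pose X : edge_type e := exist (fun A => is_edge e A) _ (mk_edge exd).
pose Ec := [set Z : edge_type e | c \in val Z].
have eAB : line_rel e A B.
  rewrite /line_rel; apply/andP; split.
    apply/negP=> /eqP/(congr1 val) /= /setP /(_ x).
    by rewrite !inE eqxx orbT eq_sym (negbTE cx) (negbTE xd).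
  by apply/set0Pn; exists c; rewrite !inE eqxx.
have eAB' : line_rel e A B'.
  rewrite /line_rel; apply/andP; split.
    apply/negP=> /eqP/(congr1 val) /= /setP /(_ z).
    by rewrite !inE eqxx orbT eq_sym (negbTE cz) (negbTE zx).
  by apply/set0Pn; exists c; rewrite !inE eqxx.
have h1 := hL _ _ eAB.
have h2 := hL _ _ eAB'.
have sub1 : X |: ((Ec :\ A) :\ B) \subset [set Z | line_rel e A Z && line_rel e B Z].
  apply/subsetP => Z; rewrite !inE => /orP[/eqP->|/and3P[ZB ZA cZ]].
    rewrite /line_rel.
    have cX : c \notin val X by rewrite /= !inE negb_or cx cd.
    rewrite -!andbA; apply/and4P; split.
    - by apply/negP=> /eqP AX; move: cX; rewrite -AX /= !inE eqxx.
    - by apply/set0Pn; exists x; rewrite !inE eqxx ?orbT.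
    - by apply/negP=> /eqP BX; move: cX; rewrite -BX /= !inE eqxx.
    - by apply/set0Pn; exists d; rewrite !inE eqxx ?orbT.
  rewrite /line_rel (eq_sym A) ZA (eq_sym B) ZB /=; apply/andP; split;
    by apply/set0Pn; exists c; rewrite !inE eqxx.
have sub2 : [set Z | line_rel e A Z && line_rel e B' Z] \subset (Ec :\ A) :\ B'.
  apply/subsetP => Z; rewrite !inE /line_rel -!andbA => /and4P[AZ /set0Pn[w AZw] B'Z /set0Pn[w' BZw]].
  rewrite -(eq_sym B') B'Z -(eq_sym A) AZ /=.
  clear AZ B'Z; have := valP Z; move=> /existsP[p /existsP[q /andP[epq /eqP VZ]]]; move: AZw BZw; rewrite VZ; have -> : sval Z = [set p; q] by exact: VZ.
  rewrite !inE => /andP[wA wV] /andP[wB wV'] /=.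
  case/orP: wA => [/eqP wc|/eqP wx]; first by rewrite -wc.
  case/orP: wB => [/eqP wc|/eqP wz]; first by rewrite -wc.
  exfalso; move/negP: nexz; apply.
  move: wV wV'; rewrite wx wz.
  case/orP=> /eqP h1' /orP[] /eqP h2'; rewrite h1' h2' in zx *;
    by [rewrite eqxx in zx | rewrite esym | ].
have BA : B \in Ec :\ A.
  rewrite in_setD1 inE eq_sym; case/andP: eAB => -> _ /=; by rewrite !inE eqxx.
have B'A : B' \in Ec :\ A.
  rewrite in_setD1 inE eq_sym; case/andP: eAB' => -> _ /=; by rewrite !inE eqxx.
have XR : X \notin (Ec :\ A) :\ B.
  rewrite !in_setD1 inE /= !inE (negbTE cx) (negbTE cd).
  by rewrite !andbF.
have le1 := subset_leq_card sub1; have le2 := subset_leq_card sub2.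
move: le1; rewrite (cardsU1 X) XR h1 => le1; move: le2; rewrite h2 => le2.
have := cardsD1 B (Ec :\ A); have := cardsD1 B' (Ec :\ A).
rewrite BA B'A => c1 c2.
have : #|Ec :\ A :\ B| = #|Ec :\ A :\ B'| by rewrite c1 in c2; case: c2.
move=> E; rewrite E in le1.
have := leq_trans le1 le2; by rewrite ltnn.
Qed.
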